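(* Let $n\ge 1$ and $0\le t<n$ be integers, and write $n=(n-t)q+r$ where $q,r$ are the unique integers with $0\le r<n-t$. Then \[ S(n,t,2)=q^{\,n-t-r}(q+1)^r. \]
   Context: A CNF formula over variables $x_1,\dots,x_n$ is a conjunction of clauses (disjunctions of literals); a $k$-CNF has all clauses of width at most $k$. $\mathrm{sat}_t(F)$ denotes the set of satisfying assignments of $F$ of Hamming weight exactly $t$. $F$ is $t$-admissible if it has no satisfying assignment of Hamming weight less than $t$. $S(n,t,k)$ is the maximum of $|\mathrm{sat}_t(F)|$ over all $t$-admissible $k$-CNF formulas $F$ on $n$ variables. *)

(* Defs.v *)
From mathcomp Require Import all_boot all_order.
Set Implicit Arguments. Unset Strict Implicit. Unset Printing Implicit Defensive.

(* A literal is a pair (i, b): (i, true) is x_i, (i, false) is its negation.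
   An assignment is the set of variables set to true; its Hamming weight is
   its cardinality. *)
Definition literal (n : nat) := ('I_n * bool)%type.
Definition clause (n : nat) := {set literal n}.
Definition cnf (n : nat) := {set clause n}.
Definition assignment (n : nat) := {set 'I_n}.

Definition lit_sat n (a : assignment n) (l : literal n) : bool :=
  (l.1 \in a) == l.2.
Definition clause_sat n (a : assignment n) (C : clause n) : bool :=
  [exists l in C, lit_sat a l].
Definition cnf_sat n (a : assignment n) (F : cnf n) : bool :=
  [forall C in F, clause_sat a C].

Definition is_kcnf n (k : nat) (F : cnf n) : bool :=
  [forall C in F, #|C| <= k].

Definition sat_t n (t : nat) (F : cnf n) : {set assignment n} :=
  [set a : assignment n | (#|a| == t) && cnf_sat a F].

Definition admissible n (t : nat) (F : cnf n) : bool :=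
  [forall a : assignment n, cnf_sat a F ==> (t <= #|a|)].

(* S(n,t,k): maximum of |sat_t(F)| over t-admissible k-CNFs on n variables
   (the set of such F is finite and nonempty: {empty clause} qualifies). *)
Definition Smax (n t k : nat) : nat :=
  \max_(F : cnf n | admissible t F && is_kcnf k F) #|sat_t t F|.

(* Main.v *)
Require Import Defs.
From mathcomp Require Import all_boot all_order.
From mathcomp Require Import zify ssralg ring.
Set Implicit Arguments. Unset Strict Implicit. Unset Printing Implicit Defensive.

Fixpoint Fr (m n : nat) : nat :=
  if m is m'.+1 then \max_(b < n.+1) (b * Fr m' (n - b)) else 1.

Lemma Fr_mono m n n' : n <= n' -> Fr m n <= Fr m n'.
Proof.
elim: m n n' => [//|m IH] n n' le /=.
apply/bigmax_leqP => b _.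
have hb : b < n'.+1 by rewrite ltnS (leq_trans _ le) // -ltnS.
apply: (leq_trans _ (leq_bigmax (Ordinal hb))) => /=.
by rewrite leq_mul2l IH ?orbT // leq_sub2r.
Qed.

Lemma Fr_step m n d : d <= n -> (n - d) * Fr m d <= Fr m.+1 n.
Proof.
move=> le /=.
have hb : n - d < n.+1 by rewrite ltnS leq_subr.
apply: (leq_trans _ (leq_bigmax (Ordinal hb))) => /=.
by rewrite subKn.
Qed.

Lemma card_bigcup_le (T I : finType) (B : {pred I}) (S : I -> {set T}) :
  #|\bigcup_(v in B) S v| <= \sum_(v in B) #|S v|.
Proof.
elim/big_rec2: _ => [|i n A _ h]; first by rewrite cards0. apply: leq_trans (leq_card_setU _ _) _.
by rewrite leq_add2l.
Qed.

Section Zykov.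
Variable T : finType.
Variable adj : rel T.
Hypothesis adj_sym : forall x y, adj x y = adj y x.

Definition clq (Q : {set T}) := [forall x in Q, forall y in Q, (x != y) ==> adj x y].
Definition cliques (V : {set T}) m :=
  [set Q : {set T} | (Q \subset V) && (#|Q| == m) && clq Q].

Lemma clqP (Q : {set T}) : reflect (forall x y, x \in Q -> y \in Q -> x != y -> adj x y) (clq Q).
Proof.
apply: (iffP forall_inP) => [h x y xQ yQ ne|h x xQ].
  by move: (h x xQ) => /forall_inP/(_ y yQ)/implyP; apply.
by apply/forall_inP => y yQ; apply/implyP; apply: h.
Qed.

Definition Nb (V : {set T}) v := [set y in V | (y != v) && adj v y].

Lemma clq_add v R : clq R -> (forall y, y \in R -> y != v -> adj v y) -> clq (v |: R).
Proof.
move=> /clqP hR hv; apply/clqP => x y; rewrite !inE.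
case/predU1P => [->|xR]; case/predU1P => [->|yR] ne.
- by rewrite eqxx in ne.
- by apply: hv => //; rewrite eq_sym.
- by rewrite adj_sym; apply: hv.
- exact: hR.
Qed.

Lemma zykov m : forall V, cliques V m.+1 = set0 -> #|cliques V m| <= Fr m #|V|.
Proof.
elim: m => [|m IH] V hV.
  rewrite /=; apply: leq_trans (_ : #|[set (set0 : {set T})]| <= 1); last by rewrite cards1.
  apply: subset_leq_card; apply/subsetP => Q; rewrite !inE => /andP[/andP[_ /eqP]].
  by move/cards0_eq => ->.
have [V0|[x0 x0V]] := set_0Vmem V.
  rewrite V0; apply: leq_trans (_ : #|(set0 : {set {set T}})| <= _); last by rewrite cards0.
  apply: subset_leq_card; apply/subsetP => Q; rewrite !inE => /andP[/andP[sQ /eqP cQ] _].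
  by move: sQ; rewrite subset0 => /eqP QE; rewrite QE cards0 in cQ.
pose x := [arg max_(x > x0 in V) #|Nb V x|].
have [xV xmax] : x \in V /\ forall v, v \in V -> #|Nb V v| <= #|Nb V x|.
  by rewrite /x; case: arg_maxnP.
set A := Nb V x.
set B := V :\: A.
have AV : A \subset V by apply/subsetP => y; rewrite inE => /andP[].
have sub : cliques V m.+1 \subset
    \bigcup_(v in B) [set v |: R | R in cliques (Nb V v) m].
  apply/subsetP => Q; rewrite inE => /andP[/andP[sQ /eqP cQ] qQ].
  have [v vQ vA] : exists2 v, v \in Q & v \notin A.
    apply/exists_inP; rewrite -negb_forall_in; apply/negP => /forall_inP QA.
    have xQ : x \notin Q by apply/negP => /QA; rewrite inE eqxx andbF.
    have : x |: Q \in cliques V m.+2.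
      rewrite inE subUset sub1set xV sQ cardsU1 xQ cQ eqxx /=.
      apply: clq_add => // y /QA; rewrite inE => /and3P[].
      by [].
    by rewrite hV inE.
  apply/bigcupP; exists v; first by rewrite inE vA (subsetP sQ).
  apply/imsetP; exists (Q :\ v); last by rewrite setD1K.
  rewrite inE -andbA; apply/and3P; split.
  - apply/subsetP => y; rewrite !inE => /andP[ne yQ].
    rewrite (subsetP sQ) //= ne /=; move/clqP: qQ; apply => //.
    by rewrite eq_sym.
  - by move: cQ; rewrite (cardsD1 v Q) vQ add1n => -[->].
  - by apply/clqP => y z; rewrite !inE => /andP[_ yQ] /andP[_ zQ]; move/clqP: qQ; apply.
apply: leq_trans (subset_leq_card sub) _.
apply: leq_trans (card_bigcup_le _ _) _.
apply: leq_trans (_ : \sum_(v in B) Fr m #|A| <= _).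
  apply: leq_sum => v vB.
  have vV : v \in V by move: vB; rewrite inE => /andP[].
  apply: leq_trans (leq_imset_card _ _) _.
  apply: leq_trans (IH _ _) (Fr_mono _ (xmax _ vV)).
  apply/eqP; rewrite -subset0; apply/subsetP => R; rewrite inE => /andP[/andP[sR /eqP cR] qR].
  have vR : v \notin R by apply/negP => /(subsetP sR); rewrite inE eqxx andbF.
  have : v |: R \in cliques V m.+2.
    rewrite inE subUset sub1set vV cardsU1 vR cR eqxx andbT /=.
    apply/andP; split.
      by apply/subsetP => y /(subsetP sR); rewrite inE => /andP[].
    apply: clq_add => // y /(subsetP sR); rewrite inE => /and3P[].
    by [].
  by rewrite hV inE.
rewrite sum_nat_const.
have -> : #|B| = #|V| - #|A| by rewrite cardsD (setIidPr AV).
apply: Fr_step; exact: subset_leq_card.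
Qed.
End Zykov.

Lemma L1 q k : (q + k) * q ^ k <= q * q.+1 ^ k.
Proof.
elim: k => [|k IH]; first by rewrite addn0 !expn0.
rewrite !expnS; move: IH; move: (q ^ k) (q.+1 ^ k) => y z IH; nia.
Qed.

Lemma L2 q k : (q - k) * q.+1 ^ k <= q ^ k.+1.
Proof.
elim: k => [|k IH]; first by rewrite subn0 expn0 expn1 muln1.
rewrite expnS [q ^ k.+2]expnS; move: IH; move: (q ^ k.+1) (q.+1 ^ k) => y z IH; nia.
Qed.

Lemma elem q x : x * q ^ (x - q) * q.+1 ^ (q - x) <= q * q.+1 ^ (x - q) * q ^ (q - x).
Proof.
case: (leqP q x) => h.
  have -> : q - x = 0 by lia.
  rewrite !expn0 !muln1.
  by have := L1 q (x - q); rewrite subnKC.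
have -> : x - q = 0 by lia.
rewrite !expn0 !muln1 -expnS.
by have := L2 q (q - x); rewrite subKn // ltnW.
Qed.

Lemma agg q (s : seq nat) :
  \prod_(x <- s) x * q ^ (sumn [seq x - q | x <- s]) * q.+1 ^ (sumn [seq q - x | x <- s])
  <= q ^ size s * q.+1 ^ (sumn [seq x - q | x <- s]) * q ^ (sumn [seq q - x | x <- s]).
Proof.
elim: s => [|x s IH]; first by rewrite big_nil.
rewrite big_cons /= !expnD expnS.
set P := \prod_(_ <- _) _.
set a := q ^ (x - q); set a' := q ^ sumn _; set b := q.+1 ^ (q - x); set b' := q.+1 ^ sumn _.
set c := q.+1 ^ (x - q); set c' := q.+1 ^ sumn _; set d := q ^ (q - x); set d' := q ^ sumn _.
have e := elem q x; rewrite -/a -/b -/c -/d in e.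
have := leq_mul e IH.
move=> h; apply: leq_trans (_ : x * a * b * (P * a' * b') <= _); first by rewrite eq_leq //; ring.
apply: leq_trans h _; rewrite eq_leq //; ring.
Qed.

Lemma sumn_rel q (s : seq nat) :
  sumn s + sumn [seq q - x | x <- s] = size s * q + sumn [seq x - q | x <- s].
Proof. elim: s => [|x s IH] //=; lia. Qed.

Lemma amgm (s : seq nat) q r : 0 < q -> sumn s <= size s * q + r -> r <= size s ->
  \prod_(x <- s) x <= q ^ (size s - r) * q.+1 ^ r.
Proof.
move=> q0 hs hr.
set A := sumn [seq x - q | x <- s]; set B := sumn [seq q - x | x <- s].
have hAB : A <= r + B by have := sumn_rel q s; rewrite -/A -/B; lia.
have h := agg q s; rewrite -/A -/B in h.
set L := q ^ A * q.+1 ^ B.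
have L0 : 0 < L by rewrite muln_gt0 !expn_gt0 q0.
rewrite -(leq_pmul2r L0).
apply: leq_trans (_ : \prod_(x <- s) x * q ^ A * q.+1 ^ B <= _); first by rewrite /L mulnA.
apply: leq_trans h _.
set k := r + B - A.
have hk : r + B = A + k by rewrite /k; lia.
have hm : size s = (size s - r) + r by lia.
rewrite {1}hm !expnD /L.
apply: leq_trans (_ : q ^ (size s - r) * q.+1 ^ A * q ^ (r + B) <= _).
  by rewrite expnD eq_leq //; ring.
apply: leq_trans (_ : q ^ (size s - r) * q ^ A * q.+1 ^ (r + B) <= _); last first.
  by rewrite expnD eq_leq //; ring.
rewrite hk !expnD.
have : q ^ k <= q.+1 ^ k by case: (k) => [|k']; [rewrite !expn0 | rewrite leq_exp2r].
move=> hq.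
apply: leq_trans (_ : q ^ (size s - r) * q.+1 ^ A * q ^ A * q ^ k <= _); first by rewrite eq_leq //; ring.
apply: leq_trans (_ : q ^ (size s - r) * q.+1 ^ A * q ^ A * q.+1 ^ k <= _); first by rewrite leq_mul2l hq orbT.
rewrite eq_leq //; ring.
Qed.

Section CNF.
Variable n : nat.
Variable F : cnf n.

Definition median (a1 a2 a3 : assignment n) : assignment n :=
  (a1 :&: a2) :|: (a1 :&: a3) :|: (a2 :&: a3).

Lemma in_median x a1 a2 a3 : x \in median a1 a2 a3 =
  [|| (x \in a1) && (x \in a2), (x \in a1) && (x \in a3) | (x \in a2) && (x \in a3)].
Proof. by rewrite !inE orbA. Qed.

Lemma pigeon3 (C : clause n) l1 l2 l3 : #|C| <= 2 -> l1 \in C -> l2 \in C -> l3 \in C ->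
  [\/ l1 = l2, l1 = l3 | l2 = l3].
Proof.
move=> hC h1 h2 h3.
case: (eqVneq l1 l2) => [|n12]; first by constructor 1.
case: (eqVneq l1 l3) => [|n13]; first by constructor 2.
case: (eqVneq l2 l3) => [|n23]; first by constructor 3.
have : #|[set l1; l2; l3]| <= #|C|.
  apply: subset_leq_card; apply/subsetP => y; rewrite !inE.
  by move=> /orP[/orP[/eqP->|/eqP->]|/eqP->].
rewrite setUC cardsU1 !inE cards2 n12 (eq_sym l3) (negbTE n13) (eq_sym l3) (negbTE n23).
move=> h; have := leq_trans h hC; by [].
Qed.

Lemma median_sat a1 a2 a3 : is_kcnf 2 F -> cnf_sat a1 F -> cnf_sat a2 F -> cnf_sat a3 F ->
  cnf_sat (median a1 a2 a3) F.
Proof.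
move=> /forall_inP hk /forall_inP s1 /forall_inP s2 /forall_inP s3.
apply/forall_inP => C CF.
have [l1 l1C e1] := exists_inP (s1 C CF).
have [l2 l2C e2] := exists_inP (s2 C CF).
have [l3 l3C e3] := exists_inP (s3 C CF).
apply/exists_inP.
move: e1 e2 e3; rewrite /lit_sat.
case: (pigeon3 (hk C CF) l1C l2C l3C) => <-.
- move=> e1 e2 _; exists l1 => //; rewrite in_median; move: e1 e2.
  by case: (l1.1 \in a1) (l1.1 \in a2) (l1.1 \in a3) (l1.2) => [] [] [] [].
- move=> e1 _ e3; exists l1 => //; rewrite in_median; move: e1 e3.
  by case: (l1.1 \in a1) (l1.1 \in a2) (l1.1 \in a3) (l1.2) => [] [] [] [].
- move=> _ e2 e3; exists l2 => //; rewrite in_median; move: e2 e3.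
  by case: (l2.1 \in a1) (l2.1 \in a2) (l2.1 \in a3) (l2.2) => [] [] [] [].
Qed.

Definition adj (i j : 'I_n) := [exists a : assignment n, cnf_sat a F && (i \notin a) && (j \notin a)].

Lemma adj_sym i j : adj i j = adj j i.
Proof.
by apply/existsP/existsP => -[a /andP[/andP[s h1] h2]]; exists a; rewrite s h1 h2.
Qed.

Lemma helly k : is_kcnf 2 F -> forall I : {set 'I_n}, #|I| = k.+2 ->
  (forall i j, i \in I -> j \in I -> i != j -> adj i j) ->
  exists a, cnf_sat a F && (I \subset ~: a).
Proof.
move=> hk; elim: k => [|k IH] I cI hI.
  have /cards2P [x [y [nxy IE]]] : #|I| == 2 by rewrite cI.
  have /existsP [a /andP[/andP[sa xa] ya]] : adj x y by apply: hI => //; rewrite IE !inE eqxx ?orbT.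
  exists a; rewrite sa /=; apply/subsetP => z; rewrite IE !inE.
  by case/orP => /eqP ->.
have [i1 i1I] : exists i1, i1 \in I by apply/card_gt0P; rewrite cI.
have c1 : #|I :\ i1| = k.+2 by move: cI; rewrite (cardsD1 i1) i1I add1n => -[].
have [i2 i2I] : exists i2, i2 \in I :\ i1 by apply/card_gt0P; rewrite c1.
have c2 : #|I :\ i1 :\ i2| = k.+1 by move: c1; rewrite (cardsD1 i2) i2I add1n => -[].
have [i3 i3I] : exists i3, i3 \in I :\ i1 :\ i2 by apply/card_gt0P; rewrite c2.
move: i2I i3I; rewrite !inE => /andP[n21 i2I] /and3P[n32 n31 i3I].
have hsub j (jI : j \in I) : #|I :\ j| = k.+2 /\
    (forall i j', i \in I :\ j -> j' \in I :\ j -> i != j' -> adj i j').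
  split; first by move: cI; rewrite (cardsD1 j) jI add1n => -[].
  by move=> i j'; rewrite !inE => /andP[_ ?] /andP[_ ?]; apply: hI.
have [ca1 ha1] := hsub _ i1I; have [ca2 ha2] := hsub _ i2I; have [ca3 ha3] := hsub _ i3I.
have [a1 /andP[s1 b1]] := IH _ ca1 ha1.
have [a2 /andP[s2 b2]] := IH _ ca2 ha2.
have [a3 /andP[s3 b3]] := IH _ ca3 ha3.
exists (median a1 a2 a3); rewrite median_sat //=.
apply/subsetP => y yI; rewrite inE in_median.
have nin (a : assignment n) j : I :\ j \subset ~: a -> y != j -> (y \in a) = false.
  by move=> /subsetP h nj; apply/negbTE; have := h y; rewrite !inE nj yI => /(_ isT).
case: (eqVneq y i1) => [e1|ny1].
  have ny2 : y != i2 by rewrite e1 eq_sym.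
  have ny3 : y != i3 by rewrite e1 eq_sym.
  by rewrite (nin _ _ b2 ny2) (nin _ _ b3 ny3) !andbF.
case: (eqVneq y i2) => [e2|ny2].
  have ny3 : y != i3 by rewrite e2 eq_sym.
  by rewrite (nin _ _ b1 ny1) (nin _ _ b3 ny3) !andbF.
by rewrite (nin _ _ b1 ny1) (nin _ _ b2 ny2) !andbF.
Qed.
End CNF.

Lemma Fr_seq m n : exists s, [/\ size s = m, sumn s <= n & Fr m n = \prod_(x <- s) x].
Proof.
elim: m n => [|m IH] n; first by exists [::]; rewrite big_nil.
have [b eb] := eq_bigmax (fun b : 'I_n.+1 => b * Fr m (n - b)) (ltac:(by rewrite card_ord)).
have [s [s1 s2 s3]] := IH (n - b).
exists (val b :: s); split => /=; first by rewrite s1.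
  have := ltn_ord b; lia.
by rewrite /= eb big_cons s3.
Qed.

Lemma Fr_le m n : 0 < m -> m <= n -> Fr m n <= (n %/ m) ^ (m - n %% m) * (n %/ m).+1 ^ (n %% m).
Proof.
move=> m0 mn.
have [s [s1 s2 ->]] := Fr_seq m n.
rewrite -s1; apply: amgm; rewrite ?s1.
- by rewrite divn_gt0.
- by rewrite mulnC -divn_eq.
- by rewrite ltnW // ltn_pmod.
Qed.

Lemma upper n t (F : cnf n) : t < n -> admissible t F -> is_kcnf 2 F ->
  #|sat_t t F| <= Fr (n - t) n.
Proof.
move=> tn /forallP adm hk.
set m := n - t.
have cC (a : assignment n) : #|~: a| = n - #|a|.
  by have := cardsC a; rewrite card_ord; lia.
have inj : {in sat_t t F &, injective (fun a : assignment n => ~: a)}.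
  by move=> a b _ _; apply: setC_inj.
rewrite -(card_in_imset inj).
apply: leq_trans (_ : #|cliques (adj F) setT m| <= _).
  apply: subset_leq_card; apply/subsetP => Z /imsetP[a aS ->].
  move: aS; rewrite !inE => /andP[/eqP ca sa].
  rewrite subsetT cC ca eqxx /=.
  apply/clqP => x y; rewrite !inE => xa ya _; apply/existsP; exists a.
  by rewrite sa xa ya.
have hV : cliques (adj F) setT m.+1 = set0.
  apply/eqP; rewrite -subset0; apply/subsetP => Q; rewrite inE => /andP[/andP[_ /eqP cQ] /clqP qQ].
  have cQ' : #|Q| = (m - 1).+2 by rewrite cQ /m; lia.
  have [a /andP[sa sub]] := helly hk cQ' qQ.
  have := implyP (adm a) sa.
  have := subset_leq_card sub; rewrite cC cQ /m; lia.
apply: leq_trans (zykov (@adj_sym n F) hV) _.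
by rewrite cardsT card_ord.
Qed.

Section Lower.
Variables n m : nat.
Hypothesis m0 : 0 < m.
Hypothesis mn : m <= n.
Let q := n %/ m.
Let r := n %% m.

Definition F0 : cnf n := [set C : clause n | [exists i : 'I_n, exists j : 'I_n,
   (i != j) && (i %% m == j %% m) && (C == [set (i, true); (j, true)])]].

Lemma F0_kcnf : is_kcnf 2 F0.
Proof.
apply/forall_inP => C; rewrite inE => /existsP[i /existsP[j /andP[_ /eqP ->]]].
by rewrite cards2; case: (_ != _).
Qed.

Lemma F0_satE (a : assignment n) : cnf_sat a F0 -> forall i j : 'I_n, i != j -> i %% m = j %% m ->
  (i \in a) || (j \in a).
Proof.
move=> /forall_inP h i j ne e.
have : [set (i, true); (j, true)] \in F0.
  by rewrite inE; apply/existsP; exists i; apply/existsP; exists j; rewrite ne e !eqxx.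
move/h/exists_inP => [l]; rewrite !inE => /orP[/eqP->|/eqP->]; rewrite /lit_sat /= => /eqP ->.
  by [].
by rewrite orbT.
Qed.

Lemma F0_satI (a : assignment n) : (forall i j : 'I_n, i != j -> i %% m = j %% m -> (i \in a) || (j \in a)) ->
  cnf_sat a F0.
Proof.
move=> H; apply/forall_inP => C; rewrite inE.
move=> /existsP[i /existsP[j /andP[/andP[ne /eqP e] /eqP ->]]].
apply/exists_inP; case/orP: (H i j ne e) => h.
  by exists (i, true); rewrite ?inE ?eqxx // /lit_sat /= h.
by exists (j, true); rewrite ?inE ?eqxx ?orbT // /lit_sat /= h.
Qed.

Lemma F0_adm : admissible (n - m) F0.
Proof.
apply/forallP => a; apply/implyP => sa.
pose f (i : 'I_n) : 'I_m := Ordinal (ltn_pmod i m0).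
have inj : {in ~: a &, injective f}.
  move=> i j; rewrite !inE => ia ja /(congr1 val) /= e.
  apply/eqP; apply/negPn/negP => ne.
  by have := F0_satE sa ne e; rewrite (negbTE ia) (negbTE ja).
have h1 := card_in_imset inj.
have h2 : #|[set f x | x in ~: a]| <= m by apply: leq_trans (max_card _) _; rewrite card_ord.
rewrite h1 in h2; have := cardsC a; rewrite card_ord; lia.
Qed.

Definition D : {set {ffun 'I_m -> 'I_q.+1}} :=
  [set psi : {ffun 'I_m -> 'I_q.+1} | [forall j : 'I_m, (r <= j) ==> (psi j < q)]].

Lemma q_pos : 0 < q.
Proof. by rewrite /q divn_gt0. Qed.

Lemma ndecomp : n = q * m + r.
Proof. exact: divn_eq. Qed.

Lemma r_lt : r < m.
Proof. by rewrite /r ltn_pmod. Qed.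

Lemma bound (psi : {ffun 'I_m -> 'I_q.+1}) (k : 'I_m) : psi \in D -> k + m * psi k < n.
Proof.
rewrite inE => /forallP /(_ k) /implyP h.
have hk := ltn_ord k; have hp := ltn_ord (psi k); have hr := r_lt; have hn := ndecomp.
case: (leqP r k) => hrk.
  have := h hrk; nia.
nia.
Qed.

Definition e (psi : {ffun 'I_m -> 'I_q.+1}) (k : 'I_m) : 'I_n :=
  insubd (widen_ord mn k) (k + m * psi k).

Lemma e_val psi k : psi \in D -> val (e psi k) = k + m * psi k.
Proof. by move=> hD; rewrite val_insubd bound. Qed.

Lemma e_mod psi k : psi \in D -> val (e psi k) %% m = k.
Proof. by move=> hD; rewrite e_val // addnC mulnC modnMDl modn_small. Qed.

Definition Zs psi : {set 'I_n} := [set e psi k | k : 'I_m].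

Lemma Zs_card psi : psi \in D -> #|Zs psi| = m.
Proof.
move=> hD; rewrite card_imset ?card_ord //.
by move=> k k' /(congr1 (fun x : 'I_n => val x %% m)); rewrite !e_mod // => /val_inj.
Qed.

Lemma Zs_sat psi : psi \in D -> cnf_sat (~: Zs psi) F0.
Proof.
move=> hD; apply: F0_satI => i j ne ej; rewrite !inE.
rewrite -negb_and; apply/negP; case/andP => /imsetP[k _ ik] /imsetP[k' _ jk'].
have : k = k' by apply: ord_inj; rewrite -(e_mod k hD) -(e_mod k' hD) -ik -jk'; exact: ej.
by move=> kk; move: ne; rewrite ik jk' kk eqxx.
Qed.

Lemma Zs_inj : {in D &, injective (fun psi => ~: Zs psi)}.
Proof.
move=> p1 p2 h1 h2 /setC_inj E; apply/ffunP => k.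
have : e p1 k \in Zs p2 by rewrite -E; apply/imsetP; exists k.
case/imsetP => k' _ ek.
have kk : k = k'.
  by apply: ord_inj; rewrite -(e_mod k h1) -(e_mod k' h2) ek.
move: ek; rewrite -kk => /(congr1 val); rewrite !e_val // => /eqP.
rewrite eqn_add2l eqn_mul2l eqn0Ngt m0 /= => /eqP; exact: val_inj.
Qed.

Lemma D_card : #|D| = q ^ (m - r) * q.+1 ^ r.
Proof.
pose G (j : 'I_m) : pred 'I_q.+1 := if r <= j then [pred y : 'I_q.+1 | y < q] else predT.
have -> : #|D| = #|(family G : pred {ffun 'I_m -> 'I_q.+1})|.
  apply: eq_card => psi; rewrite inE; apply/forallP/forallP => h j; move: (h j).
    by rewrite /G /=; case: (r <= j) => //= /implyP ->.
  by rewrite /G /=; case: (r <= j).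
rewrite card_family.
have cG j : #|G j| = if r <= j then q else q.+1.
  rewrite /G; case: (r <= j); last by rewrite card_ord.
  have -> : #|[pred y : 'I_q.+1 | y < q]| = #|[set~ (ord_max : 'I_q.+1)]|.
    apply: eq_card => y; rewrite !inE /= -val_eqE /= neq_ltn.
    by have := ltn_ord y; rewrite ltnS => hy; rewrite [q < y]ltnNge hy orbF.
  by rewrite cardsC1 card_ord.
have fp (s : seq nat) : foldr muln 1 s = \prod_(x <- s) x.
  by elim: s => [|x s IH]; rewrite ?big_nil ?big_cons //= IH.
rewrite fp big_map big_enum /=.
rewrite (eq_bigr (fun x : 'I_m => if r <= x then q else q.+1)); last by move=> x _; rewrite cG.
rewrite -(big_mkord xpredT (fun x => if r <= x then q else q.+1)).
have hr := ltnW r_lt.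
rewrite (big_cat_nat (leq0n r) hr) /=.
rewrite (eq_big_nat _ _ (F2 := fun _ => q.+1)); last by move=> i /andP[_ h]; rewrite leqNgt h.
rewrite [X in _ * X](eq_big_nat _ _ (F2 := fun _ => q)); last by move=> i /andP[h _]; rewrite h.
by rewrite !prod_nat_const_nat subn0 mulnC.
Qed.

Lemma lower : exists F : cnf n, [&& admissible (n - m) F, is_kcnf 2 F &
   q ^ (m - r) * q.+1 ^ r <= #|sat_t (n - m) F|].
Proof.
exists F0; rewrite F0_adm F0_kcnf /=.
rewrite -D_card -(card_in_imset Zs_inj).
apply: subset_leq_card; apply/subsetP => a /imsetP[psi hD ->].
rewrite inE Zs_sat // andbT.
have := cardsC (Zs psi); rewrite card_ord Zs_card // => h.
apply/eqP; lia.
Qed.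
End Lower.

Theorem theorem3 (n t : nat) :
  1 <= n -> t < n ->
  Smax n t 2 = (n %/ (n - t)) ^ (n - t - n %% (n - t)) * (n %/ (n - t)).+1 ^ (n %% (n - t)).
Proof.
move=> n1 tn.
have m0 : 0 < n - t by lia.
have mn : n - t <= n by lia.
have ht : n - (n - t) = t by lia.
apply/eqP; rewrite eqn_leq; apply/andP; split.
  apply/bigmax_leqP => F /andP[adm hk].
  exact: leq_trans (upper tn adm hk) (Fr_le m0 mn).
have [F /and3P[adm hk hc]] := lower m0 mn.
rewrite ht in adm hc.
apply: leq_trans hc _.
by apply: (leq_bigmax_cond F); rewrite adm hk.
Qed.
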